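(* Let $X$ be a compact metric space, $T:X\to X$ continuous, and $\Phi=\{\phi_n\}$ a supadditive potential on $X$. Fix a positive integer $k$. Then for every subset $Z\subseteq X$, \[ P_Z(T,\Phi)\ge P_Z\big(T,\tfrac1k\phi_k\big). \]
   Context: $B_n(x,\epsilon)=\{y:d(T^ix,T^iy)<\epsilon,\ 0\le i\le n-1\}$. Supadditive potential: continuous $\phi_n$ with $\phi_{n+m}(x)\ge\phi_n(x)+\phi_m(T^nx)$. For $Z\subseteq X$, $\epsilon>0$, a cover of $Z$ is a countable family $\Gamma=\{B_{n_i}(x_i,\epsilon)\}$ covering $Z$, $n(\Gamma)=\min n_i$. $P_Z(T,\Phi)$: $M(Z,\Phi,s,N,\epsilon)=\inf_\Gamma\sum_i\exp(-sn_i+\phi_{n_i}(x_i))$ over covers with $n(\Gamma)\ge N$; $m(Z,\Phi,s,\epsilon)=\lim_NM$; $P_Z(T,\Phi,\epsilon)=\inf\{s:m(Z,\Phi,s,\epsilon)=0\}$; $P_Z(T,\Phi)=\liminf_{\epsilon\to0}P_Z(T,\Phi,\epsilon)$. For a continuous function $\psi$, $P_Z(T,\psi)$ is defined with the sequence $g_n=\sum_{i=0}^{n-1}\psi\circ T^i$ and supremum over balls: $M(Z,\psi,s,N,\epsilon)=\inf_\Gamma\sum_i\exp(-sn_i+\sup_{y\in B_{n_i}(x_i,\epsilon)}g_{n_i}(y))$ over covers with $n(\Gamma)\ge N$, $m(Z,\psi,s,\epsilon)=\lim_NM$, $P_Z(T,\psi,\epsilon)=\inf\{s:m(Z,\psi,s,\epsilon)=0\}$,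 $P_Z(T,\psi)=\liminf_{\epsilon\to0}P_Z(T,\psi,\epsilon)$. *)

(* Defs.v *)
From HB Require Import structures.
From mathcomp Require Import all_boot all_order all_algebra.
From mathcomp Require Import all_classical all_reals all_analysis.
Set Implicit Arguments. Unset Strict Implicit. Unset Printing Implicit Defensive.
Import Order.TTheory GRing.Theory Num.Theory numFieldTopology.Exports.
Local Open Scope classical_set_scope.
Local Open Scope ring_scope.

Section Pressure.
Context {R : realType} {X : metricType R}.

Definition bowen_ball (T : X -> X) (n : nat) (x : X) (eps : R) : set X :=
  [set y | forall i : nat, (i < n)%N -> mdist (iter i T x) (iter i T y) < eps].

Definition bowen_cover (T : X -> X) (Z : set X) (N : nat) (eps : R)
  (I : set nat) (n : nat -> nat) (x : nat -> X) : Prop :=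
  (forall i, I i -> (N <= n i)%N) /\
  Z `<=` \bigcup_(i in I) bowen_ball T (n i) (x i) eps.

Definition M_gen (T : X -> X) (w : nat -> X -> \bar R) (Z : set X)
  (s : R) (N : nat) (eps : R) : \bar R :=
  ereal_inf [set v | exists (I : set nat) (n : nat -> nat) (x : nat -> X),
      bowen_cover T Z N eps I n x /\
      v = (\esum_(i in I) expeR ((- (s * (n i)%:R))%:E + w (n i) (x i)))%E].

Definition pressure_gen (T : X -> X) (w : R -> nat -> X -> \bar R) (Z : set X)
  : \bar R :=
  limf_einf
    (fun eps : R =>
       ereal_inf [set s%:E | s in
          [set s : R | limn (fun N => M_gen T (w eps) Z s N eps) = 0%E]])
    (at_right (0 : R)).

Definition pressure_seq (T : X -> X) (phi : nat -> X -> R) (Z : set X) : \bar R :=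
  pressure_gen T (fun _ n x => (phi n x)%:E) Z.

Definition birkhoff_sum (T : X -> X) (psi : X -> R) (n : nat) (y : X) : R :=
  \sum_(0 <= i < n) psi (iter i T y).

Definition pressure_fun (T : X -> X) (psi : X -> R) (Z : set X) : \bar R :=
  pressure_gen T
    (fun eps n x => ereal_sup [set (birkhoff_sum T psi n y)%:E
                              | y in bowen_ball T n x eps]) Z.

End Pressure.

Definition supadditive {R : realType} {X : metricType R} (T : X -> X)
  (phi : nat -> X -> R) : Prop :=
  (forall n, continuous (phi n)) /\
  forall (n m : nat) (x : X), (0 < n)%N -> (0 < m)%N ->
    phi n x + phi m (iter n T x) <= phi (n + m)%N x.

(* Main.v *)
Require Import Defs.
From HB Require Import structures.
From mathcomp Require Import all_boot all_order all_algebra.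
From mathcomp Require Import all_classical all_reals all_analysis.
Import Order.TTheory GRing.Theory Num.Theory numFieldTopology.Exports.
Local Open Scope classical_set_scope.
Local Open Scope ring_scope.
From mathcomp Require Import zify lra.
Section Comb.
Context {R : realType} {X : metricType R} (T : X -> X) (phi : nat -> X -> R) (k : nat).
Hypothesis k0 : (0 < k)%N.
Hypothesis supadd : forall (n m : nat) (x : X), (0 < n)%N -> (0 < m)%N ->
    phi n x + phi m (iter n T x) <= phi (n + m)%N x.
Variable B : R.
Hypothesis B0 : 0 <= B.
Hypothesis HB : forall r x, (r <= k)%N -> `|phi r x| <= B.

Definition gsum (n : nat) (x : X) : R :=
  \sum_(l < n %/ k) phi k (iter (l * k) T x).

Lemma gsum_small n x : (n < k)%N -> gsum n x = 0.
Proof. by move=> nk; rewrite /gsum divn_small// big_ord0. Qed.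

Lemma gsum0 x : gsum 0 x = 0.
Proof. exact: gsum_small. Qed.

Lemma gsum_rec n x : (k <= n)%N ->
  gsum n x = phi k x + gsum (n - k) (iter k T x).
Proof.
move=> kn; rewrite /gsum.
have -> : (n %/ k = ((n - k) %/ k).+1)%N.
  by rewrite -{1}(subnK kn) -{2}(mul1n k) divnDMl// addn1.
rewrite big_ord_recl /=; congr (_ + _).
by apply: eq_bigr => l _; rewrite /bump /= add1n mulSnr iterD.
Qed.

Lemma phiLB r x : (r <= k)%N -> - B <= phi r x.
Proof. by move=> rk; have := HB r x rk; rewrite ler_norml => /andP[]. Qed.

Lemma phiUB r x : (r <= k)%N -> phi r x <= B.
Proof. by move=> rk; have := HB r x rk; rewrite ler_norml => /andP[]. Qed.

Lemma gsum_bound m y : (0 < m)%N -> gsum m y - B <= phi m y.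
Proof.
elim: m {-2}m (leqnn m) y => [m|M IH m] mM y m0.
  by exfalso; lia.
case: (ltnP m k) => mk.
  by rewrite gsum_small// sub0r phiLB// ltnW.
rewrite gsum_rec//.
case: (posnP (m - k)) => mk0.
  have -> : m = k by lia.
  by rewrite subnn gsum0 addr0 lerBlDr lerDl.
have := supadd _ _ y k0 mk0; rewrite subnKC//.
have := IH (m - k)%N ltac:(lia) (iter k T y) mk0.
move=> h1 h2; apply: le_trans h2; lra.
Qed.

Lemma gsum_shift n j x : (0 < n)%N -> (j < k)%N ->
  gsum (n - j) (iter j T x) - 2 * B <= phi n x.
Proof.
move=> n0 jk; have B1 : 0 <= B := B0.
case: (posnP j) => [->|j0].
  rewrite subn0 /=; have := @gsum_bound n x n0. move=> h; lra.
case: (ltnP j n) => jn.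
  have nj : (0 < n - j)%N by lia.
  have := supadd _ _ x j0 nj; rewrite subnKC; last by lia.
  move=> h.
  have h2 := @gsum_bound (n - j) (iter j T x) nj.
  have := @phiLB j x (ltnW jk); lra.
have -> : (n - j = 0)%N by lia.
rewrite gsum0; have := @phiLB n x (_ : (n <= k)%N) => /(_ ltac:(lia)); lra.
Qed.

Definition Ssum n x : R := \sum_(0 <= j < k) gsum (n - j) (iter j T x).
Definition hsum n x : R := \sum_(0 <= i < n) phi k (iter i T x).

Lemma Ssum_rec n x :
  Ssum n.+1 x = (if (k <= n.+1)%N then phi k x else 0) + Ssum n (T x).
Proof.
rewrite /Ssum; have [k' hk] : exists k', k = k'.+1 by exists k.-1; rewrite prednK.
rewrite hk big_nat_recl// big_nat_recr//= subn0.
under eq_bigr => j _ do rewrite subSS -iterS iterSr.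
rewrite [RHS]addrCA [LHS]addrC; congr (_ + _).
case: (leqP k'.+1 n.+1) => kn.
  rewrite gsum_rec; last by rewrite hk.
  by rewrite hk subSS iterSr.
rewrite gsum_small ?hk// add0r.
have -> : (n - k' = 0)%N by lia.
by rewrite gsum0.
Qed.

Lemma hsum_rec n x : hsum n.+1 x = phi k x + hsum n (T x).
Proof.
rewrite /hsum big_nat_recl//; congr (_ + _).
by apply: eq_bigr => i _; rewrite iterSr.
Qed.

Lemma Ssum0 x : Ssum 0 x = 0.
Proof. by rewrite /Ssum big1// => j _; rewrite sub0n gsum0. Qed.

Lemma hsum_diff n x : hsum n x <= Ssum n x + (minn n k)%:R * B.
Proof.
have B1 : 0 <= B := B0.
elim: n x => [|n IH] x.
  by rewrite /hsum big_geq// Ssum0 min0n mul0r addr0.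
rewrite hsum_rec Ssum_rec; have h1 := IH (T x).
case: (leqP k n.+1) => kn.
  have h2 : (minn n k)%:R * B <= k%:R * B.
    by apply: ler_wpM2r => //; rewrite ler_nat; lia.
  lra.
have e : minn n k = n by lia.
rewrite e in h1.
have h3 := @phiUB k x (leqnn k).
rewrite -addn1 natrD mulrDl mul1r; lra.
Qed.

Lemma hsum_bound n x : (0 < n)%N -> hsum n x <= k%:R * (phi n x + 3 * B).
Proof.
move=> n0; have B1 : 0 <= B := B0.
have h1 := hsum_diff n x.
have h2 : (minn n k)%:R * B <= k%:R * B.
  by apply: ler_wpM2r => //; rewrite ler_nat; lia.
have h3 : Ssum n x <= k%:R * (phi n x + 2 * B).
  rewrite /Ssum big_mkord.
  apply: (@le_trans _ _ (\sum_(j < k) (phi n x + 2 * B))).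
    by apply: ler_sum => j _; have := @gsum_shift n j x n0 (ltn_ord j); lra.
  by rewrite sumr_const card_ord [X in _ <= X]mulr_natl.
lra.
Qed.

End Comb.
Lemma cont_bounded (R : realType) (X : metricType R) (f : X -> R) :
  compact [set: X] -> continuous f -> exists M, forall x, `|f x| <= M.
Proof.
move=> cX cf.
have /compact_bounded := continuous_compact (continuous_subspaceT cf) cX.
case => M [_ HM]; exists (M + 1) => x.
by apply: (HM (M + 1) _ (f x)); [rewrite ltrDl | exists x].
Qed.

Lemma bound_upto (R : realType) (X : metricType R) (phi : nat -> X -> R) k :
  compact [set: X] -> (forall n, continuous (phi n)) ->
  exists B, 0 <= B /\ forall r x, (r <= k)%N -> `|phi r x| <= B.
Proof.
move=> cX cphi; elim: k => [|k [B [B0 HB]]].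
  have [M HM] := @cont_bounded _ _ _ cX (cphi 0%N).
  exists (Num.max M 0); split; first by rewrite le_max lexx orbT.
  move=> r x; rewrite leqn0 => /eqP ->.
  by rewrite le_max HM.
have [M HM] := @cont_bounded _ _ _ cX (cphi k.+1).
exists (Num.max M B); split; first by rewrite le_max B0 orbT.
move=> r x; rewrite leq_eqVlt => /orP[/eqP ->|rk].
  by rewrite le_max HM.
by rewrite le_max HB ?orbT.
Qed.

Lemma unif_cont (R : realType) (X : metricType R) (f : X -> R) :
  compact [set: X] -> continuous f -> forall d, 0 < d ->
  \forall e \near (0:R)^'+, forall a b, mdist a b < e -> `|f a - f b| < d.
Proof.
move=> cX cf d d0.
have /compact_near_coveringP cov := cX.
suff H : \forall e \near (0:R)^'+, [set: X] `<=`
    (fun a => forall b, mdist a b < e -> `|f a - f b| < d).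
  by apply: filterS H => e He a b ab; exact: (He a I b ab).
apply: cov => x _.
have := cf x; move/cvgrPdist_lt => /(_ (d / 2)).
rewrite divr_gt0// => /(_ isT) /nbhs_ballP [r /= r0 Hr].
exists (ball x (r / 2), [set e | e < r / 2]).
  split => /=; first by apply: nbhsx_ballx; rewrite divr_gt0.
  by apply: nbhs_right_lt; rewrite divr_gt0.
case=> x' e [/= xx' er] b x'b.
have h1 : `|f x - f x'| < d / 2.
  by apply: Hr; rewrite ballEmdist /=; move: xx'; rewrite ballEmdist /=; lra.
have h2 : `|f x - f b| < d / 2.
  apply: Hr; rewrite ballEmdist /=.
  move: xx'; rewrite ballEmdist /= => xx'.
  have := metric_triangle x x' b; lra.
have := ler_distD (f x) (f x') (f b).
rewrite distrC in h1.
lra.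
Qed.

Section Ereal.
Local Open Scope ereal_scope.

Lemma M_ge0 (R : realType) (X : metricType R) (T : X -> X) w Z s N eps :
  0 <= M_gen T w Z s N eps.
Proof.
apply/ereal_infP => _ [I [n [x [_ ->]]]]; apply: esum_ge0 => i _.
exact: expeR_ge0.
Qed.

Lemma M_mono (R : realType) (X : metricType R) (T : X -> X) w Z s N N' eps :
  (N <= N')%N -> M_gen T w Z s N eps <= M_gen T w Z s N' eps.
Proof.
move=> NN'; apply: le_ereal_inf => _ [I [n [x [[h1 h2] ->]]]].
exists I, n, x; split => //; split => // i Ii; exact: leq_trans NN' (h1 i Ii).
Qed.

Lemma esumZ_le (R : realType) (I : set nat) (a : nat -> \bar R) (c : R) :
  (0 <= c)%R -> (forall i, 0 <= a i) ->
  \esum_(i in I) (c%:E * a i) <= c%:E * \esum_(i in I) a i.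
Proof.
move=> c0 a0; apply: ge_ereal_sup => _ [A fA <-].
rewrite -ge0_mule_fsumr//.
apply: lee_wpmul2l; first by rewrite lee_fin.
by apply: le_ereal_sup_tmp; exists (\sum_(i \in A) a i)%R => //; exists A.
Qed.

Lemma M_compare (R : realType) (X : metricType R) (T : X -> X)
  (w1 w2 : nat -> X -> \bar R) Z (s d : R) N eps (c : R) :
  (0 < c)%R -> (0 < N)%N ->
  (forall n x, (0 < n)%N -> expeR ((- ((s + d) * n%:R))%:E + w1 n x) <=
      c%:E * expeR ((- (s * n%:R))%:E + w2 n x)) ->
  M_gen T w2 Z s N eps = 0 -> M_gen T w1 Z (s + d) N eps = 0.
Proof.
move=> c0 N0 hw M0.
apply/eqP; rewrite eq_le M_ge0 andbT.
apply/lee_addgt0Pr => e e0; rewrite add0e.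
have : M_gen T w2 Z s N eps < (e / c)%:E by rewrite M0 lte_fin divr_gt0.
move=> /ereal_inf_lt [_ [I [n [x [[hN hcov] ->]]]]] hlt.
apply: (@le_trans _ _ (\esum_(i in I)
   expeR ((- ((s + d) * (n i)%:R))%:E + w1 (n i) (x i)))).
  by apply: ge_ereal_inf; eexists; first by exists I, n, x.
apply: (@le_trans _ _ (\esum_(i in I)
   (c%:E * expeR ((- (s * (n i)%:R))%:E + w2 (n i) (x i))))).
  by apply: le_esum => i Ii; apply: hw; exact: leq_trans N0 (hN i Ii).
apply: le_trans (esumZ_le _ _ _ _ (ltW c0) (fun i => expeR_ge0 _)) _.
apply: (@le_trans _ _ (c%:E * (e / c)%:E)).
  by apply: lee_wpmul2l; [rewrite lee_fin ltW | exact: ltW].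
by rewrite -EFinM mulrC divfK// gt_eqF.
Qed.

Lemma P_step (R : realType) (A B : set R) (d : R) :
  (forall s, B s -> A (s + d)%R) ->
  ereal_inf [set s%:E | s in A] <= ereal_inf [set s%:E | s in B] + d%:E.
Proof.
move=> hAB; rewrite -leeBlDr//.
apply/ereal_infP => _ [s Bs <-]; rewrite leeBlDr//.
apply: ge_ereal_inf; exists (s + d)%:E; last by rewrite EFinD.
by exists (s + d)%R => //; apply: hAB.
Qed.

Lemma liminf_step (R : realType) (f g : R -> \bar R) (Q : set R) (d : R) :
  (\forall e \near (0:R)^'+, Q e) -> (forall e, Q e -> f e <= g e + d%:E) ->
  limf_einf f (at_right (0:R)) <= limf_einf g (at_right (0:R)) + d%:E.
Proof.
move=> hQ hfg; rewrite !limf_einfE.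
apply: ge_ereal_sup => _ [V FV <-].
have FW : (0:R)^'+ (V `&` Q) by apply: filterI.
apply: (@le_trans _ _ (ereal_inf (f @` (V `&` Q)))).
  by apply: le_ereal_inf => _ [y [Vy _] <-]; exists y.
apply: (@le_trans _ _ (ereal_inf (g @` (V `&` Q)) + d%:E)).
  rewrite -leeBlDr//; apply/ereal_infP => _ [y Wy <-].
  rewrite leeBlDr//.
  apply: le_trans (hfg y Wy.2); apply: ge_ereal_inf; exists (f y) => //.
apply: leeD2r; apply: le_ereal_sup_tmp.
by exists (ereal_inf (g @` (V `&` Q))) => //; exists (V `&` Q).
Qed.

Lemma limn_zero (R : realType) (u : nat -> \bar R) :
  {homo u : n m / (n <= m)%N >-> n <= m} -> (forall N, 0 <= u N) ->
  limn u = 0 -> forall N, u N = 0.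
Proof.
move=> hu u0 l0 N.
have hl : limn u = ereal_sup (range u).
  by apply/cvg_lim => //; exact: ereal_nondecreasing_cvgn.
apply/eqP; rewrite eq_le u0 andbT -l0 hl.
by apply: le_ereal_sup_tmp; exists (u N) => //; exists N.
Qed.
End Ereal.

Theorem lemma4p1 (R : realType) (X : metricType R) (T : X -> X)
  (phi : nat -> X -> R) (k : nat) :
  compact [set: X] -> continuous T -> supadditive T phi -> (0 < k)%N ->
  forall Z : set X,
    (pressure_fun T (fun x => (phi k x / k%:R)%R) Z <= pressure_seq T phi Z)%E.
Proof.
move=> cX cT [cphi supadd] k0 Z.
set psi := fun x => (phi k x / k%:R)%R.
have [B [B0 HB]] := @bound_upto R X phi k cX cphi.
have Hbs : forall n x, (0 < n)%N -> birkhoff_sum T psi n x <= phi n x + 3 * B.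
  move=> n x n0.
  have := @hsum_bound R X T phi k k0 supadd B B0 HB n x n0.
  rewrite /birkhoff_sum /psi -mulr_suml /hsum => h.
  rewrite ler_pdivrMr ?ltr0n// mulrC; exact: h.
have cpsi : continuous psi.
  move=> x; rewrite /psi; apply: cvgM; [exact: cphi | exact: cvg_cst].
apply/lee_addgt0Pr => d d0.
have hU := @unif_cont R X psi cX cpsi d d0.
rewrite /pressure_fun /pressure_seq /pressure_gen.
apply: (liminf_step _ _ _ _ _ hU) => eps Heps.
apply: P_step => s Hs.
set w1 := (fun n x => ereal_sup [set (birkhoff_sum T psi n y)%:E
                              | y in bowen_ball T n x eps]).
set w2 := (fun (n : nat) x => (phi n x)%:E).
have M0 := limn_zero _ _ (fun N N' (h : (N <= N')%N) => M_mono _ _ T w2 Z s N N' eps h)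
  (fun N => M_ge0 _ _ T w2 Z s N eps) Hs.
have hw : forall n x, (0 < n)%N ->
    (expeR ((- ((s + d) * n%:R))%:E + w1 n x) <=
     (expR (3 * B))%:E * expeR ((- (s * n%:R))%:E + w2 n x))%E.
  move=> n x n0.
  have hsup : (w1 n x <= (phi n x + 3 * B + n%:R * d)%:E)%E.
    apply: ge_ereal_sup => _ [y yb <-]; rewrite lee_fin.
    have h1 : birkhoff_sum T psi n y <= birkhoff_sum T psi n x + n%:R * d.
      rewrite /birkhoff_sum.
      have -> : n%:R * d = \sum_(0 <= i < n) d by rewrite sumr_const_nat subn0 mulr_natl.
      rewrite -big_split /= big_nat_cond [X in _ <= X]big_nat_cond.
      apply: ler_sum => i /andP[/andP[_ iln] _].
      have := Heps _ _ (yb i iln).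
      move/ltW; rewrite ler_norml => /andP[h2 h3]; lra.
    have := Hbs n x n0; lra.
  apply: (@le_trans _ _ (expeR ((- ((s + d) * n%:R) + (phi n x + 3 * B + n%:R * d))%:E))).
    by rewrite lee_expeR EFinD; exact: leeD2l.
  rewrite /w2 -EFinD /= -EFinM lee_fin -expRD ler_expR; lra.
have key : forall N, (0 < N)%N -> M_gen T w1 Z (s + d) N eps = 0%E.
  move=> N N0; apply: (M_compare _ _ T w1 w2 Z s d N eps (expR (3 * B))) => //.
  exact: expR_gt0.
have all0 : forall N, M_gen T w1 Z (s + d) N eps = 0%E.
  case=> [|N]; last exact: key.
  apply/eqP; rewrite eq_le M_ge0 andbT -(key 1%N isT).
  exact: M_mono.
rewrite /mkset /=.
rewrite (_ : (fun N => M_gen T w1 Z (s + d) N eps) = fun _ => 0%E).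
  apply: lim_cst; exact: ereal_hausdorff.
by apply: funext => N; rewrite all0.
Qed.
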